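(* If the bivariate random vector $(X,Y)$ is exchangeable, i.e. $(X,Y)\overset{d}{=}(Y,X)$, then $$|\max(X,-Y)|\overset{d}{=}|\min(X,-Y)|\overset{d}{=}|X|\overset{d}{=}|Y|.$$
   Context: $\overset{d}{=}$ denotes equality in distribution. *)

(* Defs.v *)
From HB Require Import structures.
From mathcomp Require Import all_boot all_order all_algebra.
From mathcomp Require Import all_classical all_reals all_analysis.
Set Implicit Arguments. Unset Strict Implicit. Unset Printing Implicit Defensive.
Import Order.TTheory GRing.Theory Num.Theory.
Local Open Scope classical_set_scope.
Local Open Scope ring_scope.

Definition eq_dist d d' (T : measurableType d) (U : measurableType d')
  (R : realType) (P : probability T R) (f g : T -> U) : Prop :=
  forall A : set U, measurable A -> P (f @^-1` A) = P (g @^-1` A).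

(* Main.v *)
Require Import Defs.
From HB Require Import structures.
From mathcomp Require Import all_boot all_order all_algebra.
From mathcomp Require Import all_classical all_reals all_analysis.
From mathcomp Require Import measurable_realfun lra.
Import Order.TTheory GRing.Theory Num.Theory.
Local Open Scope classical_set_scope.
Local Open Scope ring_scope.

Lemma measIU d (T : measurableType d) (R : realType) (P : probability T R)
  (E F : set T) : measurable E -> measurable F ->
  (P E + P F = P (E `&` F) + P (E `|` F))%E.
Proof.
move=> mE mF.
rewrite (measureDI P mF mE).
have -> : E `|` F = E `|` (F `\` E).
  by apply/seteqP; split => x /=; [case=> ?; [left|]; [|case: (pselect (E x)) => ?; [left|right]]|case=> [?|[]]]; auto.
rewrite measureU //; last 2 first.
- exact: measurableD.
- by apply/seteqP; split => x //= [? []].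
rewrite setIC addeA [(P E + _ + _)%E]addeC; done.
Qed.

Lemma minmax_case (R : realType) (x y : R) :
  (`|Num.min x (- y)| = `|x| /\ `|Num.max x (- y)| = `|y|) \/
  (`|Num.min x (- y)| = `|y| /\ `|Num.max x (- y)| = `|x|).
Proof.
rewrite /Order.min /Order.max /=. case: ifP => h.
- by left; rewrite normrN.
- by right; rewrite normrN.
Qed.

Lemma mm (R:realType) (x y : R): `|Num.max y (-x)| = `|Num.min x (-y)|.
Proof.
rewrite /Order.min /Order.max /=; case: ifP => h1; case: ifP => h2.
- by rewrite normrN.
- by move/negbT: h2; rewrite -leNgt => h2; lra.
- by move/negbT: h1; rewrite -leNgt => h1; lra.
- by rewrite normrN.
Qed.

Theorem corollary2p13 (d : measure_display) (T : measurableType d)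
  (R : realType) (P : probability T R) (X Y : {RV P >-> R}) :
  eq_dist P (fun w => (X w, Y w)) (fun w => (Y w, X w)) ->
  eq_dist P (fun w => `|Num.max (X w) (- Y w)|) (fun w => `|Num.min (X w) (- Y w)|) /\
  eq_dist P (fun w => `|Num.min (X w) (- Y w)|) (fun w => `|X w|) /\
  eq_dist P (fun w => `|X w|) (fun w => `|Y w|).
Proof.
move=> H.
have mX : measurable_fun setT X by [].
have mY : measurable_fun setT Y by [].
have mpre : forall f : T -> R, measurable_fun setT f ->
    forall A, measurable A -> measurable (f @^-1` A).
  by move=> f mf A mA; rewrite -[f @^-1` A]setTI; exact: mf.
have mmin : measurable_fun setT (fun w => `|Num.min (X w) (- Y w)|).
  apply: measurableT_comp => //; apply: measurable_minr => //.
  exact: measurable_funN.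
have mmax : measurable_fun setT (fun w => `|Num.max (X w) (- Y w)|).
  apply: measurableT_comp => //; apply: measurable_maxr => //.
  exact: measurable_funN.
have mnX : measurable_fun setT (fun w => `|X w|) by exact: measurableT_comp.
have mnY : measurable_fun setT (fun w => `|Y w|) by exact: measurableT_comp.
have part1 : eq_dist P (fun w => `|Num.max (X w) (- Y w)|)
                       (fun w => `|Num.min (X w) (- Y w)|).
  move=> A mA.
  pose B := (fun p : R * R => `|Num.max p.1 (- p.2)|) @^-1` A.
  have mB : measurable B.
    have mf : measurable_fun setT (fun p : R * R => `|Num.max p.1 (- p.2)|).
      apply: measurableT_comp => //.
      apply: measurable_maxr; first exact: measurable_fst.
      exact: measurable_funN measurable_snd.
    by rewrite /B -[X in measurable X]setTI; exact: mf.
  have := H B mB; rewrite /B /preimage /=.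
  move=> ->; congr (P _); apply/funext => w /=.
  by rewrite mm.
have part3 : eq_dist P (fun w => `|X w|) (fun w => `|Y w|).
  move=> A mA.
  pose B := (fun p : R * R => `|p.1|) @^-1` A.
  have mB : measurable B.
    have mf : measurable_fun setT (fun p : R * R => `|p.1|).
      apply: measurableT_comp => //; exact: measurable_fst.
    by rewrite /B -[X in measurable X]setTI; exact: mf.
  exact: H B mB.
split => //; split => //.
move=> A mA.
pose E := (fun w => `|Num.min (X w) (- Y w)|) @^-1` A.
pose F := (fun w => `|Num.max (X w) (- Y w)|) @^-1` A.
pose G := (fun w => `|X w|) @^-1` A.
pose K := (fun w => `|Y w|) @^-1` A.
have mE : measurable E by exact: mpre.
have mF : measurable F by exact: mpre.
have mG : measurable G by exact: mpre.
have mK : measurable K by exact: mpre.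
have hI : E `&` F = G `&` K.
  apply/seteqP; split => w /=; rewrite /E /F /G /K /preimage /=;
  by case: (@minmax_case R (X w) (Y w)) => -[-> ->] [].
have hU : E `|` F = G `|` K.
  apply/seteqP; split => w /=; rewrite /E /F /G /K /preimage /=;
  by case: (@minmax_case R (X w) (Y w)) => -[-> ->] [] ?; by [left|right].
have e1 := @measIU _ _ _ P _ _ mE mF.
have e2 := @measIU _ _ _ P _ _ mG mK.
rewrite hI hU -e2 in e1.
have hF : P F = P E by rewrite (part1 A mA).
have hK : P K = P G by rewrite (part3 A mA).
rewrite hF hK in e1.
have eE := fineK (fin_num_measure P E mE).
have eG := fineK (fin_num_measure P G mG).
move: eE eG e1; rewrite -/E -/G.
set a := fine (P E); set b := fine (P G).
move=> <- <-.
by rewrite -!EFinD => -[h]; congr (_%:E); lra.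
Qed.
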